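(* Let $\lambda>0$, $M>0$, $\ell>0$, $m>0$, $g>0$, $k>0$, and set $\omega^2=g/\ell$, $A=-\omega^2(1+m/M)$, $B=2\lambda\left(\frac{1}{M\ell}+\frac{1}{m\ell}\right)$. Consider the linear system $\dot y=Q y$ on $\mathbb{R}^8$, $y=(\theta_1,v_1,\theta_2,v_2,x_1,w_1,x_2,w_2)^T$, given by \[ \begin{aligned} \dot\theta_1&=v_1, & \dot v_1&=A\theta_1+Bv_1+\tfrac{k}{M\ell}x_1+\tfrac{2\rho}{M\ell}w_1-\tfrac{k}{M\ell}x_2,\\ \dot\theta_2&=v_2, & \dot v_2&=A\theta_2+Bv_2-\tfrac{k}{M\ell}x_1+\tfrac{k}{M\ell}x_2+\tfrac{2\rho}{M\ell}w_2,\\ \dot x_1&=w_1, & \dot w_1&=\tfrac{mg}{M}\theta_1-\tfrac{2\lambda}{M}v_1-\tfrac{k}{M}x_1-\tfrac{2\rho}{M}w_1+\tfrac{k}{M}x_2,\\ \dot x_2&=w_2, & \dot w_2&=\tfrac{mg}{M}\theta_2-\tfrac{2\lambda}{M}v_2+\tfrac{k}{M}x_1-\tfrac{k}{M}x_2-\tfrac{2\rho}{M}w_2, \end{aligned} \] and the piecewise-defined system (S) described in the context. Then, for every sufficiently small $\rho>0$, both systems have the line of fixed points $\{\theta_1=v_1=\theta_2=v_2=w_1=w_2=0,\ x_1=x_2\}$, and this line of fixed points is Lyapunov unstable for both systems.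
   Context: System (S) (two identical coupled pendulum clocks, small-amplitude model): with $f(\theta;\lambda,\tilde\theta)=-2\lambda$ if $|\theta|<\tilde\theta$ and $=2\lambda$ if $|\theta|\ge\tilde\theta$ ($\tilde\theta>0$), unknowns $\theta_1,\theta_2,x_1,x_2$ of $t$, \[ \begin{aligned} &\ddot\theta_1+\Big(\tfrac{1}{m\ell}+\tfrac{1}{M\ell}\Big)f(\theta_1;\lambda,\tilde\theta)\dot\theta_1+\omega^2\Big(1+\tfrac{m}{M}\Big)\theta_1-\tfrac{2\rho}{M\ell}\dot x_1=-\tfrac{k}{M\ell}(x_2-x_1),\\ &\ddot\theta_2+\Big(\tfrac{1}{m\ell}+\tfrac{1}{M\ell}\Big)f(\theta_2;\lambda,\tilde\theta)\dot\theta_2+\omega^2\Big(1+\tfrac{m}{M}\Big)\theta_2-\tfrac{2\rho}{M\ell}\dot x_2=\tfrac{k}{M\ell}(x_2-x_1),\\ &\ddot x_1-\tfrac{1}{M}f(\theta_1;\lambda,\tilde\theta)\dot\theta_1-\tfrac{m}{M}g\theta_1+\tfrac{2\rho}{M}\dot x_1=\tfrac{k}{M}(x_2-x_1),\\ &\ddot x_2-\tfrac{1}{M}f(\theta_2;\lambda,\tilde\theta)\dot\theta_2-\tfrac{m}{M}g\theta_2+\tfrac{2\rho}{M}\dot x_2=-\tfrac{k}{M}(x_2-x_1), \end{aligned} \] regarded as a first-order system in $(\theta_1,\dot\theta_1,\theta_2,\dot\theta_2,x_1,\dot x_1,x_2,\dot x_2)$. In the region $|\theta_1|,|\theta_2|<\tilde\theta$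 it coincides with the linear system $\dot y=Qy$ of the claim. Here $\theta_i$ are pendulum angles, $x_i$ attachment-point positions, $m$ pendulum mass, $\ell$ pendulum length, $M$ attachment mass, $k$ coupling stiffness, $\rho$ coupling damping, $g$ gravity. *)

(* Defs.v *)
From Stdlib Require Import Reals.
Open Scope R_scope.

Record st := mkst { th1 : R; v1 : R; th2 : R; v2 : R;
                    x1 : R; w1 : R; x2 : R; w2 : R }.

Definition st0 : st := mkst 0 0 0 0 0 0 0 0.

Definition dist8 (y p : st) : R :=
  sqrt ((th1 y - th1 p)^2 + (v1 y - v1 p)^2 + (th2 y - th2 p)^2 + (v2 y - v2 p)^2
      + (x1 y - x1 p)^2 + (w1 y - w1 p)^2 + (x2 y - x2 p)^2 + (w2 y - w2 p)^2).

Definition fixed_line (p : st) : Prop :=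
  th1 p = 0 /\ v1 p = 0 /\ th2 p = 0 /\ v2 p = 0 /\ w1 p = 0 /\ w2 p = 0
  /\ x1 p = x2 p.

Definition omega2 (g l : R) : R := g / l.

Definition Qfield (lam M l m g k rho : R) (y : st) : st :=
  let A := - omega2 g l * (1 + m / M) in
  let B := 2 * lam * (1 / (M * l) + 1 / (m * l)) in
  mkst
    (v1 y)
    (A * th1 y + B * v1 y + k / (M * l) * x1 y + 2 * rho / (M * l) * w1 y
       - k / (M * l) * x2 y)
    (v2 y)
    (A * th2 y + B * v2 y - k / (M * l) * x1 y + k / (M * l) * x2 y
       + 2 * rho / (M * l) * w2 y)
    (w1 y)
    (m * g / M * th1 y - 2 * lam / M * v1 y - k / M * x1 y - 2 * rho / M * w1 y
       + k / M * x2 y)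
    (w2 y)
    (m * g / M * th2 y - 2 * lam / M * v2 y + k / M * x1 y - k / M * x2 y
       - 2 * rho / M * w2 y).

Definition fsw (lam thT th : R) : R :=
  if Rlt_dec (Rabs th) thT then - 2 * lam else 2 * lam.

Definition Sfield (lam M l m g k rho thT : R) (y : st) : st :=
  let c := 1 / (m * l) + 1 / (M * l) in
  let W := omega2 g l * (1 + m / M) in
  mkst
    (v1 y)
    (- c * fsw lam thT (th1 y) * v1 y - W * th1 y + 2 * rho / (M * l) * w1 y
       - k / (M * l) * (x2 y - x1 y))
    (v2 y)
    (- c * fsw lam thT (th2 y) * v2 y - W * th2 y + 2 * rho / (M * l) * w2 y
       + k / (M * l) * (x2 y - x1 y))
    (w1 y)
    (1 / M * fsw lam thT (th1 y) * v1 y + m / M * g * th1 y - 2 * rho / M * w1 y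
       + k / M * (x2 y - x1 y))
    (w2 y)
    (1 / M * fsw lam thT (th2 y) * v2 y + m / M * g * th2 y - 2 * rho / M * w2 y
       - k / M * (x2 y - x1 y)).

Definition is_solution (F : st -> st) (y : R -> st) (T : R) : Prop :=
  forall t, 0 <= t <= T ->
    derivable_pt_lim (fun s => th1 (y s)) t (th1 (F (y t))) /\
    derivable_pt_lim (fun s => v1 (y s)) t (v1 (F (y t))) /\
    derivable_pt_lim (fun s => th2 (y s)) t (th2 (F (y t))) /\
    derivable_pt_lim (fun s => v2 (y s)) t (v2 (F (y t))) /\
    derivable_pt_lim (fun s => x1 (y s)) t (x1 (F (y t))) /\
    derivable_pt_lim (fun s => w1 (y s)) t (w1 (F (y t))) /\
    derivable_pt_lim (fun s => x2 (y s)) t (x2 (F (y t))) /\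
    derivable_pt_lim (fun s => w2 (y s)) t (w2 (F (y t))).

Definition is_fixed_point (F : st -> st) (p : st) : Prop := F p = st0.

Definition near (S : st -> Prop) (e : R) (y : st) : Prop :=
  exists p, S p /\ dist8 y p < e.

Definition lyapunov_stable (F : st -> st) (S : st -> Prop) : Prop :=
  forall eps, 0 < eps -> exists delta, 0 < delta /\
    forall (y : R -> st) (T : R), 0 <= T -> is_solution F y T ->
      near S delta (y 0) ->
      forall t, 0 <= t <= T -> near S eps (y t).

Definition lyapunov_unstable (F : st -> st) (S : st -> Prop) : Prop :=
  ~ lyapunov_stable F S.

(* Main.v *)
Require Import Defs.
From Stdlib Require Import Reals Ranalysis Lra Psatz FunctionalExtensionality.
Open Scope R_scope.


Definition Aco (M l m g : R) := - omega2 g l * (1 + m / M).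
Definition Bco (lam M l m : R) := 2 * lam * (1 / (M * l) + 1 / (m * l)).
Definition cc2 lam M l m rho := 2*rho/M - Bco lam M l m.
Definition cc1 lam M l m g rho := - Aco M l m g - Bco lam M l m * (2*rho/M)
   + 2*rho/(M*l) * (2*lam/M).
Definition cc0 M l m g rho := - Aco M l m g * (2*rho/M) - 2*rho/(M*l) * (m*g/M).
Definition cub lam M l m g rho (s : R) :=
  s^3 + cc2 lam M l m rho * s^2 + cc1 lam M l m g rho * s + cc0 M l m g rho.
Definition sg lam M l m rho r := - cc2 lam M l m rho - r.
Definition pq lam M l m g rho r := cc1 lam M l m g rho - r * sg lam M l m rho r.

Definition mode (sig pi eps gam del : R) (p0 p1 : R -> R) (t : R) : st :=
  let p2 := sig * p1 t - pi * p0 t in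
  let p3 := sig * p2 - pi * p1 t in
  mkst (p2 + eps * p1 t) (p3 + eps * p2) (p2 + eps * p1 t) (p3 + eps * p2)
       (gam * p0 t - del * p1 t) (gam * p1 t - del * p2)
       (gam * p0 t - del * p1 t) (gam * p1 t - del * p2).

Lemma lin_deriv (p0 p1 : R -> R) t d0 d1 a b :
  derivable_pt_lim p0 t d0 -> derivable_pt_lim p1 t d1 ->
  derivable_pt_lim (fun s => a * p0 s + b * p1 s) t (a * d0 + b * d1).
Proof.
  intros H0 H1.
  apply (derivable_pt_lim_plus (fun s => a * p0 s) (fun s => b * p1 s)).
  - apply (derivable_pt_lim_scal p0 a t d0 H0).
  - apply (derivable_pt_lim_scal p1 b t d1 H1).
Qed.

Lemma deriv_ext f g t d : (forall s, f s = g s) -> derivable_pt_lim g t d ->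
  derivable_pt_lim f t d.
Proof. intros H; replace f with g; auto. extensionality s; auto. Qed.

Lemma deriv_eq f t d d' : derivable_pt_lim f t d -> d = d' -> derivable_pt_lim f t d'.
Proof. intros H E; subst; auto. Qed.

Lemma mode_sol lam M l m g k rho r p0 p1 T :
  M <> 0 -> l <> 0 -> m <> 0 ->
  cub lam M l m g rho r = 0 ->
  (forall t, derivable_pt_lim p0 t (p1 t)) ->
  (forall t, derivable_pt_lim p1 t (sg lam M l m rho r * p1 t - pq lam M l m g rho r * p0 t)) ->
  is_solution (Qfield lam M l m g k rho)
    (mode (sg lam M l m rho r) (pq lam M l m g rho r) (2*rho/M) (m*g/M) (2*lam/M) p0 p1) T.
Proof.
  intros HM Hl Hm Hc D0 D1 t _.
  set (sig := sg lam M l m rho r). set (pi := pq lam M l m g rho r).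
  set (eps := 2*rho/M). set (gam := m*g/M). set (del := 2*lam/M).
  assert (G: forall a b, derivable_pt_lim (fun s => a * p0 s + b * p1 s) t
            (a * p1 t + b * (sig * p1 t - pi * p0 t))).
  { intros; apply lin_deriv; auto. }
  assert (Ethv: (sig+eps)*(sig*(sig * p1 t - pi * p0 t) - pi*p1 t) - pi*(sig * p1 t - pi * p0 t)
     = Aco M l m g * (sig*p1 t - pi*p0 t + eps*p1 t)
       + Bco lam M l m * (sig*(sig * p1 t - pi * p0 t) - pi*p1 t + eps*(sig * p1 t - pi * p0 t))
       + 2*rho/(M*l) * (gam*p1 t - del*(sig * p1 t - pi * p0 t))).
  { unfold cub in Hc.
    transitivity (Aco M l m g * (sig*p1 t - pi*p0 t + eps*p1 t)
       + Bco lam M l m * (sig*(sig * p1 t - pi * p0 t) - pi*p1 t + eps*(sig * p1 t - pi * p0 t))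
       + 2*rho/(M*l) * (gam*p1 t - del*(sig * p1 t - pi * p0 t))
       + (r ^ 3 + cc2 lam M l m rho * r ^ 2 + cc1 lam M l m g rho * r + cc0 M l m g rho) * p1 t).
    2: { rewrite Hc; ring. }
    unfold sig, pi, pq, sg, cc2, cc1, cc0, eps, gam, del, Aco, Bco, omega2. field; auto. }
  assert (Dth: derivable_pt_lim (fun s => -pi*p0 s + (sig+eps)*p1 s) t
     (sig*(sig * p1 t - pi * p0 t) - pi*p1 t + eps*(sig * p1 t - pi * p0 t))).
  { eapply deriv_eq; [apply G|]; ring. }
  assert (Dv: derivable_pt_lim (fun s => (-sig*pi - eps*pi)*p0 s + (sig*sig - pi + eps*sig)*p1 s) t
     (Aco M l m g * (sig*p1 t - pi*p0 t + eps*p1 t)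
       + Bco lam M l m * (sig*(sig * p1 t - pi * p0 t) - pi*p1 t + eps*(sig * p1 t - pi * p0 t))
       + 2*rho/(M*l) * (gam*p1 t - del*(sig * p1 t - pi * p0 t)))).
  { eapply deriv_eq; [apply G|]. rewrite <- Ethv; ring. }
  assert (Dx: derivable_pt_lim (fun s => gam*p0 s + (-del)*p1 s) t
     (gam * p1 t - del * (sig * p1 t - pi * p0 t))).
  { eapply deriv_eq; [apply G|]; ring. }
  assert (Dw: derivable_pt_lim (fun s => del*pi*p0 s + (gam - del*sig)*p1 s) t
     (m * g / M * (sig * p1 t - pi * p0 t + eps * p1 t) -
      2 * lam / M * (sig * (sig * p1 t - pi * p0 t) - pi * p1 t + eps * (sig * p1 t - pi * p0 t))
      - 2 * rho / M * (gam * p1 t - del * (sig * p1 t - pi * p0 t)))).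
  { eapply deriv_eq; [apply G|]. unfold gam, del, eps. field; auto. }
  unfold mode, Qfield; simpl.
  refine (conj _ (conj _ (conj _ (conj _ (conj _ (conj _ (conj _ _))))))).
  - eapply deriv_ext; [|apply Dth]; intros; simpl; ring.
  - eapply deriv_ext; [|eapply deriv_eq; [apply Dv|]]; [intros; simpl; ring|].
    unfold Aco, Bco; ring.
  - eapply deriv_ext; [|apply Dth]; intros; simpl; ring.
  - eapply deriv_ext; [|eapply deriv_eq; [apply Dv|]]; [intros; simpl; ring|].
    unfold Aco, Bco; ring.
  - eapply deriv_ext; [|apply Dx]; intros; simpl; ring.
  - eapply deriv_ext; [|eapply deriv_eq; [apply Dw|]]; [intros; simpl; ring|].
    unfold gam, del, eps; ring.
  - eapply deriv_ext; [|apply Dx]; intros; simpl; ring.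
  - eapply deriv_ext; [|eapply deriv_eq; [apply Dw|]]; [intros; simpl; ring|].
    unfold gam, del, eps; ring.
Qed.


Lemma S_eq_Q lam M l m g k rho thT y :
  M <> 0 -> l <> 0 -> m <> 0 -> Rabs (th1 y) < thT -> Rabs (th2 y) < thT ->
  Sfield lam M l m g k rho thT y = Qfield lam M l m g k rho y.
Proof.
  intros HM Hl Hm H1 H2. unfold Sfield, Qfield, fsw, omega2.
  destruct (Rlt_dec (Rabs (th1 y)) thT); [|contradiction].
  destruct (Rlt_dec (Rabs (th2 y)) thT); [|contradiction].
  f_equal; field; auto.
Qed.

Definition scale (c : R) (y : st) : st :=
  mkst (c*th1 y) (c*v1 y) (c*th2 y) (c*v2 y) (c*x1 y) (c*w1 y) (c*x2 y) (c*w2 y).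

Lemma dist_th1 y p : Rabs (th1 y - th1 p) <= dist8 y p.
Proof.
  unfold dist8. rewrite <- sqrt_Rsqr_abs. apply sqrt_le_1_alt. unfold Rsqr.
  repeat match goal with |- context [?a ^ 2] => 
    assert (0 <= a ^ 2) by apply pow2_ge_0; fail end.
  pose proof (pow2_ge_0 (v1 y - v1 p)). pose proof (pow2_ge_0 (th2 y - th2 p)).
  pose proof (pow2_ge_0 (v2 y - v2 p)). pose proof (pow2_ge_0 (x1 y - x1 p)).
  pose proof (pow2_ge_0 (w1 y - w1 p)). pose proof (pow2_ge_0 (x2 y - x2 p)).
  pose proof (pow2_ge_0 (w2 y - w2 p)). nra.
Qed.

Lemma core F thT (Y1 : R -> st) a H h0 :
  0 < thT -> 0 < a -> 0 < H -> 0 < h0 ->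
  (forall c T, 0 < c -> (forall t, 0 <= t <= T -> Rabs (c * th1 (Y1 t)) < thT /\ Rabs (c * th2 (Y1 t)) < thT) ->
     is_solution F (fun t => scale c (Y1 t)) T) ->
  x1 (Y1 0) = x2 (Y1 0) ->
  (forall t, th2 (Y1 t) = th1 (Y1 t)) ->
  (forall t, 0 <= t -> Rabs (th1 (Y1 t)) <= H * exp (a * t)) ->
  (forall N, exists t, N <= t /\ h0 * exp (a * t) <= Rabs (th1 (Y1 t))) ->
  lyapunov_unstable F fixed_line.
Proof.
  intros Hth Ha HH Hh0 Hsol Hx Hth2 Hbd Hgr Hst.
  set (eps := thT * h0 / (4 * H)).
  assert (Heps: 0 < eps) by (unfold eps; apply Rdiv_lt_0_compat; nra).
  destruct (Hst eps Heps) as [d [Hd Hd']].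
  set (y0 := Y1 0).
  set (S0 := th1 y0 ^ 2 + v1 y0 ^ 2 + th2 y0 ^ 2 + v2 y0 ^ 2 + w1 y0 ^ 2 + w2 y0 ^ 2).
  assert (HS0: 0 <= S0).
  { unfold S0. pose proof (pow2_ge_0 (th1 y0)). pose proof (pow2_ge_0 (v1 y0)).
    pose proof (pow2_ge_0 (th2 y0)). pose proof (pow2_ge_0 (v2 y0)).
    pose proof (pow2_ge_0 (w1 y0)). pose proof (pow2_ge_0 (w2 y0)). lra. }
  set (K := thT * (S0 + 1) / (2 * H * d)).
  assert (HK: 0 < K) by (unfold K; apply Rdiv_lt_0_compat; nra).
  destruct (Hgr (K / a + 1)) as [T [HT1 HT2]].
  assert (HKa: 0 < K / a) by (apply Rdiv_lt_0_compat; lra).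
  assert (HT0: 0 < T) by lra.
  assert (HeT: K < exp (a * T)).
  { pose proof (exp_ineq1 (a*T)). assert (a * T <> 0) by nra.
    assert (K <= a * T).
    { apply (Rmult_le_reg_l (/a)). apply Rinv_0_lt_compat; lra.
      replace (/ a * (a * T)) with T by (field; lra). unfold Rdiv in HT1; lra. }
    specialize (H0 H1). lra. }
  set (E := exp (a * T)). fold E in HeT.
  assert (HE: 0 < E) by apply exp_pos.
  set (c := thT / (2 * H * E)).
  assert (Hc: 0 < c) by (unfold c; apply Rdiv_lt_0_compat; nra).
  assert (HcHE: c * H * E = thT / 2) by (unfold c; field; lra).
  assert (Hsmall: forall t, 0 <= t <= T -> Rabs (c * th1 (Y1 t)) < thT).
  { intros t Ht. rewrite Rabs_mult, (Rabs_right c) by lra.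
    specialize (Hbd t (proj1 Ht)).
    assert (exp (a * t) <= E).
    { unfold E. destruct (Req_dec t T); [subst; lra|].
      left; apply exp_increasing; nra. }
    assert (Rabs (th1 (Y1 t)) <= H * E) by nra. nra. }
  assert (Hs: is_solution F (fun t => scale c (Y1 t)) T).
  { apply Hsol; auto. intros t Ht; rewrite Hth2; split; apply Hsmall; auto. }
  assert (Hnear: near fixed_line d (scale c (Y1 0))).
  { exists (mkst 0 0 0 0 (c * x1 y0) 0 (c * x1 y0) 0). split.
    - unfold fixed_line; simpl; repeat split; auto.
    - unfold dist8, scale; simpl. unfold y0; rewrite <- Hx. fold y0.
      replace ((c * th1 y0 - 0) ^ 2 + (c * v1 y0 - 0) ^ 2 + (c * th2 y0 - 0) ^ 2 +
        (c * v2 y0 - 0) ^ 2 + (c * x1 y0 - c * x1 y0) ^ 2 + (c * w1 y0 - 0) ^ 2 +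
        (c * x1 y0 - c * x1 y0) ^ 2 + (c * w2 y0 - 0) ^ 2) with (c^2 * S0)
        by (unfold S0; ring).
      rewrite <- (sqrt_pow2 d) by lra. apply sqrt_lt_1_alt. split; [nra|].
      assert (c * (S0 + 1) < d).
      { unfold c. apply (Rmult_lt_reg_r (2 * H * E / (S0+1))).
        apply Rdiv_lt_0_compat; nra.
        replace (thT / (2 * H * E) * (S0 + 1) * (2 * H * E / (S0 + 1))) with thT by (field; nra).
        unfold K in HeT.
        apply (Rmult_lt_reg_r (/ (2 * H * d))). apply Rinv_0_lt_compat; nra.
        replace (d * (2 * H * E / (S0 + 1)) * / (2 * H * d)) with (E / (S0+1)) by (field; nra).
        apply (Rmult_lt_reg_r (S0+1)); [lra|].
        replace (E / (S0 + 1) * (S0 + 1)) with E by (field; lra).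
        unfold Rdiv in HeT. nra. }
      assert (c^2 * S0 <= (c*(S0+1))^2) by nra.
      assert (0 < c*(S0+1)) by nra.
      set (u := c*(S0+1)) in *.
      assert (u*u < d*d) by (apply Rmult_le_0_lt_compat; lra). simpl in *. match goal with |- ?L < _ => replace L with (c*(c*1)*S0) by (unfold S0; ring) end; lra. }
  destruct (Hd' (fun t => scale c (Y1 t)) T (Rlt_le _ _ HT0) Hs Hnear T (conj (Rlt_le _ _ HT0) (Rle_refl T)))
    as [p [Hp Hdp]].
  pose proof (dist_th1 (scale c (Y1 T)) p) as Hdt.
  destruct Hp as [Hp0 _]. rewrite Hp0, Rminus_0_r in Hdt. simpl in Hdt.
  rewrite Rabs_mult, (Rabs_right c) in Hdt by lra.
  assert (c * (h0 * E) <= c * Rabs (th1 (Y1 T))) by (apply Rmult_le_compat_l; unfold E; lra).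
  assert (c * (h0 * E) = 2 * eps) by (unfold eps, c; field; split; apply Rgt_not_eq; lra).
  lra.
Qed.


Lemma mode_unstable lam M l m g k rho thT r f0 f1 a H h0 :
  0 < M -> 0 < l -> 0 < m -> 0 < thT ->
  cub lam M l m g rho r = 0 ->
  (forall t, derivable_pt_lim f0 t (f1 t)) ->
  (forall t, derivable_pt_lim f1 t (sg lam M l m rho r * f1 t - pq lam M l m g rho r * f0 t)) ->
  0 < a -> 0 < H -> 0 < h0 ->
  (forall t, 0 <= t -> Rabs (sg lam M l m rho r * f1 t - pq lam M l m g rho r * f0 t + 2*rho/M * f1 t) <= H * exp (a * t)) ->
  (forall N, exists t, N <= t /\ h0 * exp (a * t) <= Rabs (sg lam M l m rho r * f1 t - pq lam M l m g rho r * f0 t + 2*rho/M * f1 t)) ->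
  lyapunov_unstable (Qfield lam M l m g k rho) fixed_line /\
  lyapunov_unstable (Sfield lam M l m g k rho thT) fixed_line.
Proof.
  intros HM Hl Hm Hth Hc D0 D1 Ha HH Hh0 Hbd Hgr.
  set (Y1 := mode (sg lam M l m rho r) (pq lam M l m g rho r) (2*rho/M) (m*g/M) (2*lam/M) f0 f1).
  assert (Hsc: forall c, (fun t => scale c (Y1 t)) =
     mode (sg lam M l m rho r) (pq lam M l m g rho r) (2*rho/M) (m*g/M) (2*lam/M)
       (fun t => c * f0 t) (fun t => c * f1 t)).
  { intros c; extensionality t; unfold Y1, mode, scale; simpl; f_equal; ring. }
  assert (HQ: forall c T, is_solution (Qfield lam M l m g k rho) (fun t => scale c (Y1 t)) T).
  { intros c T. rewrite Hsc. apply mode_sol; try lra.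
    - intros t. apply (derivable_pt_lim_scal f0 c t _ (D0 t)).
    - intros t. eapply deriv_eq. apply (derivable_pt_lim_scal f1 c t _ (D1 t)). ring. }
  assert (Hx: x1 (Y1 0) = x2 (Y1 0)) by reflexivity.
  assert (Ht2: forall t, th2 (Y1 t) = th1 (Y1 t)) by reflexivity.
  split.
  - apply (core _ thT Y1 a H h0); auto.
  - apply (core _ thT Y1 a H h0); auto.
    intros c T Hc0 Hsmall t Ht.
    destruct (Hsmall t Ht) as [S1 S2].
    assert (E: Sfield lam M l m g k rho thT (scale c (Y1 t)) = Qfield lam M l m g k rho (scale c (Y1 t))).
    { apply S_eq_Q; simpl; auto; lra. }
    rewrite E. apply (HQ c T t Ht).
Qed.


Lemma dexp a t : derivable_pt_lim (fun s => exp (a * s)) t (a * exp (a * t)).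
Proof.
  eapply deriv_eq.
  apply (derivable_pt_lim_comp (fun s => a * s) exp t a (exp (a*t))).
  - eapply deriv_eq. apply derivable_pt_lim_scal. apply derivable_pt_lim_id. ring.
  - apply derivable_pt_lim_exp.
  - ring.
Qed.

Lemma dcos b t : derivable_pt_lim (fun s => cos (b * s)) t (- b * sin (b * t)).
Proof.
  eapply deriv_eq.
  apply (derivable_pt_lim_comp (fun s => b * s) cos t b (- sin (b*t))).
  - eapply deriv_eq. apply derivable_pt_lim_scal. apply derivable_pt_lim_id. ring.
  - apply derivable_pt_lim_cos.
  - ring.
Qed.

Lemma dsin b t : derivable_pt_lim (fun s => sin (b * s)) t (b * cos (b * t)).
Proof.
  eapply deriv_eq.
  apply (derivable_pt_lim_comp (fun s => b * s) sin t b (cos (b*t))).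
  - eapply deriv_eq. apply derivable_pt_lim_scal. apply derivable_pt_lim_id. ring.
  - apply derivable_pt_lim_sin.
  - ring.
Qed.

Lemma dec a b t : derivable_pt_lim (fun s => exp (a * s) * cos (b * s)) t
   (exp (a*t) * (a * cos (b*t) - b * sin (b*t))).
Proof.
  eapply deriv_eq.
  apply (derivable_pt_lim_mult (fun s => exp (a*s)) (fun s => cos (b*s))).
  apply dexp. apply dcos. simpl; ring.
Qed.

Lemma des a b t : derivable_pt_lim (fun s => exp (a * s) * sin (b * s)) t
   (exp (a*t) * (a * sin (b*t) + b * cos (b*t))).
Proof.
  eapply deriv_eq.
  apply (derivable_pt_lim_mult (fun s => exp (a*s)) (fun s => sin (b*s))).
  apply dexp. apply dsin. simpl; ring.
Qed.


Theorem proposition2 (lam M l m g k thT : R) :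
  0 < lam -> 0 < M -> 0 < l -> 0 < m -> 0 < g -> 0 < k -> 0 < thT ->
  exists rho0, 0 < rho0 /\
    forall rho, 0 < rho < rho0 ->
      (forall p, fixed_line p ->
         is_fixed_point (Qfield lam M l m g k rho) p /\
         is_fixed_point (Sfield lam M l m g k rho thT) p) /\
      lyapunov_unstable (Qfield lam M l m g k rho) fixed_line /\
      lyapunov_unstable (Sfield lam M l m g k rho thT) fixed_line.
Proof.
  intros Hlam HM Hl Hm Hg Hk Hth.
  assert (HB: 0 < Bco lam M l m).
  { unfold Bco. assert (0 < 1/(M*l)) by (apply Rdiv_lt_0_compat; nra).
    assert (0 < 1/(m*l)) by (apply Rdiv_lt_0_compat; nra). nra. }
  exists (M * Bco lam M l m / 2). split; [nra|].
  intros rho [Hr Hr0].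
  assert (Heps: 0 < 2*rho/M) by (apply Rdiv_lt_0_compat; lra).
  assert (HepsB: 2*rho/M < Bco lam M l m).
  { apply (Rmult_lt_reg_r M); [lra|]. replace (2*rho/M*M) with (2*rho) by (field; lra). lra. }
  split.
  { intros [t1 u1 t2 u2 a1 b1 a2 b2] [E1 [E2 [E3 [E4 [E5 [E6 E7]]]]]]; simpl in *; subst.
    unfold is_fixed_point, Qfield, Sfield, st0; simpl; split; f_equal; ring. }
  set (Q2 := cc2 lam M l m rho). set (Q1 := cc1 lam M l m g rho). set (Q0 := cc0 M l m g rho).
  assert (HC0: 0 < Q0).
  { unfold Q0, cc0, Aco, omega2.
    replace (- (- (g / l) * (1 + m / M)) * (2 * rho / M) - 2 * rho / (M * l) * (m * g / M))
      with (2 * rho * g / (M * l)) by (field; lra).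
    apply Rdiv_lt_0_compat; nra. }
  set (L := 1 + Rabs Q2 + Rabs Q1 + Rabs Q0).
  assert (HcL: cub lam M l m g rho (-L) < 0).
  { unfold cub. fold Q2 Q1 Q0.
    pose proof (Rle_abs Q2). pose proof (Rle_abs Q0). pose proof (Rle_abs (-Q1)).
    rewrite Rabs_Ropp in H1.
    pose proof (Rabs_pos Q2). pose proof (Rabs_pos Q1). pose proof (Rabs_pos Q0).
    assert (HL1: 1 <= L) by (unfold L; lra).
    assert (Q2 * L^2 <= Rabs Q2 * L^2) by (apply Rmult_le_compat_r; nra).
    assert (- Q1 * L <= Rabs Q1 * L) by (apply Rmult_le_compat_r; lra).
    assert (Rabs Q1 * L <= Rabs Q1 * L^2) by (apply Rmult_le_compat_l; nra).
    assert (1 <= L^2) by nra.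
    assert (Q0 <= Rabs Q0 * L^2) by (apply Rle_trans with (Rabs Q0); [lra| rewrite <- (Rmult_1_r (Rabs Q0)) at 1; apply Rmult_le_compat_l; lra]).
    assert (L^3 = L * L^2) by ring.
    assert ((Rabs Q2 + Rabs Q1 + Rabs Q0) * L^2 < L * L^2) by (unfold L at 2; nra).
    replace ((-L)^3 + Q2 * (-L)^2 + Q1 * (-L) + Q0) with (- L^3 + Q2 * L^2 + (-Q1) * L + Q0) by ring.
    nra. }
  assert (Hc0: 0 < cub lam M l m g rho 0) by (unfold cub; fold Q0; lra).
  assert (HLp: 0 < L) by (unfold L; pose proof (Rabs_pos Q2); pose proof (Rabs_pos Q1); pose proof (Rabs_pos Q0); lra).
  assert (Hcont: continuity (cub lam M l m g rho)) by (unfold cub; reg).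
  destruct (IVT (cub lam M l m g rho) (-L) 0 Hcont ltac:(lra) HcL Hc0) as [r [Hrr Hcr]].
  assert (Hrn: r < 0).
  { destruct (Req_dec r 0); [subst; lra| lra]. }
  set (sig := sg lam M l m rho r). set (pi := pq lam M l m g rho r).
  assert (Hsig: 0 < sig).
  { unfold sig, sg, cc2. lra. }
  set (eps := 2*rho/M). fold eps in Heps.
  destruct (Rlt_dec (sig^2 - 4*pi) 0) as [Hd|Hd].
  -
    set (a := sig/2). set (b := sqrt (-(sig^2 - 4*pi)) / 2).
    assert (Ha: 0 < a) by (unfold a; lra).
    assert (Hb: 0 < b).
    { unfold b. apply Rdiv_lt_0_compat; [|lra]. apply sqrt_lt_R0. lra. }
    assert (Hpi: pi = a^2 + b^2).
    { unfold a, b. replace ((sqrt (- (sig ^ 2 - 4 * pi)) / 2) ^ 2) with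
        ((sqrt (- (sig ^ 2 - 4 * pi)))^2 / 4) by field.
      rewrite pow2_sqrt by lra. field. }
    set (P := (sig + eps) * a - pi). set (Q := (sig + eps) * b).
    assert (HQ: 0 < Q) by (unfold Q; nra).
    apply (mode_unstable lam M l m g k rho thT r
             (fun t => exp (a*t) * cos (b*t))
             (fun t => a * (exp (a*t) * cos (b*t)) + (-b) * (exp (a*t) * sin (b*t)))
             a (Rabs P + Q) Q); auto; try lra.
    + intros t. eapply deriv_eq; [apply dec|]. ring.
    + intros t. eapply deriv_eq; [apply lin_deriv; [apply dec|apply des]|].
      fold sig pi. assert (Hs: sig = 2*a) by (unfold a; field). rewrite Hs, Hpi; ring.
    + pose proof (Rabs_pos P); lra.
    + intros t _. fold sig pi eps.
      set (e := exp (a*t)). assert (He: 0 < e) by apply exp_pos.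
      replace (sig * (a * (e * cos (b * t)) + - b * (e * sin (b * t))) - pi * (e * cos (b * t)) +
        eps * (a * (e * cos (b * t)) + - b * (e * sin (b * t)))) with
        (e * (P * cos (b*t) + (- Q) * sin (b*t))) by (unfold P, Q; ring).
      rewrite Rabs_mult, (Rabs_right e) by lra.
      rewrite (Rmult_comm (Rabs P + Q) e). apply Rmult_le_compat_l; [lra|].
      eapply Rle_trans; [apply Rabs_triang|]. rewrite !Rabs_mult.
      pose proof (COS_bound (b*t)); pose proof (SIN_bound (b*t)).
      assert (Rabs (cos (b*t)) <= 1) by (apply Rabs_le; lra).
      assert (Rabs (sin (b*t)) <= 1) by (apply Rabs_le; lra).
      rewrite Rabs_Ropp, (Rabs_right Q) by lra.
      pose proof (Rabs_pos P). pose proof (Rabs_pos (cos (b*t))). pose proof (Rabs_pos (sin (b*t))).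
      nra.
    + intros N. destruct (INR_unbounded (N*b/(2*PI))) as [n Hn].
      exists ((PI/2 + 2*INR n*PI)/b).
      pose proof PI_RGT_0.
      assert (Hbt: b * ((PI/2 + 2*INR n*PI)/b) = PI/2 + 2*INR n*PI) by (field; lra).
      split.
      * apply (Rmult_le_reg_l b); [lra|]. rewrite Hbt.
        assert (N * b < 2 * INR n * PI).
        { apply (Rmult_lt_reg_r (/(2*PI))). apply Rinv_0_lt_compat; lra.
          replace (2 * INR n * PI * / (2 * PI)) with (INR n) by (field; lra).
          unfold Rdiv in Hn; lra. }
        lra.
      * fold sig pi eps. rewrite Hbt, cos_period, sin_period, cos_PI2, sin_PI2.
        set (e := exp (a * ((PI / 2 + 2 * INR n * PI) / b))).
        assert (He: 0 < e) by apply exp_pos.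
        replace (sig * (a * (e * 0) + - b * (e * 1)) - pi * (e * 0) + eps * (a * (e * 0) + - b * (e * 1)))
          with (- (Q * e)) by (unfold Q; ring).
        rewrite Rabs_Ropp, Rabs_right by nra. lra.
  -
    apply Rnot_lt_le in Hd.
    set (r1 := (sig + sqrt (sig^2 - 4*pi)) / 2).
    pose proof (sqrt_pos (sig^2 - 4*pi)).
    assert (Hr1: 0 < r1) by (unfold r1; lra).
    assert (Hr1e: r1 * r1 = sig * r1 - pi).
    { unfold r1. pose proof (pow2_sqrt (sig^2 - 4*pi) Hd).
      set (q := sqrt (sig^2 - 4*pi)) in *. field_simplify. nra. }
    set (K := r1 * r1 + eps * r1).
    assert (HK: 0 < K) by (unfold K; nra).
    apply (mode_unstable lam M l m g k rho thT r
             (fun t => exp (r1*t)) (fun t => r1 * exp (r1*t)) r1 K K); auto; try lra.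
    + intros t. apply dexp.
    + intros t. fold sig pi. eapply deriv_eq.
      apply (derivable_pt_lim_scal (fun s => exp (r1*s))). apply dexp.
      replace (sig * (r1 * exp (r1 * t)) - pi * exp (r1 * t)) with ((sig * r1 - pi) * exp (r1*t)) by ring.
      rewrite <- Hr1e; ring.
    + intros t _. fold sig pi eps.
      replace (sig * (r1 * exp (r1 * t)) - pi * exp (r1 * t) + eps * (r1 * exp (r1 * t)))
        with (K * exp (r1*t)) by (unfold K; rewrite Hr1e; ring).
      pose proof (exp_pos (r1*t)). rewrite Rabs_right by nra. lra.
    + intros N. exists N. split; [lra|]. fold sig pi eps.
      replace (sig * (r1 * exp (r1 * N)) - pi * exp (r1 * N) + eps * (r1 * exp (r1 * N)))
        with (K * exp (r1*N)) by (unfold K; rewrite Hr1e; ring).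
      pose proof (exp_pos (r1*N)). rewrite Rabs_right by nra. lra.
Qed.
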